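(* Let $t\geq 2$ be an integer, $m=4t+2$, $n=2^m+1$, and let $\delta_2=2^{4t-1}+\frac{2^{4t}-1}{5}$, $\delta_3=\delta_2-6$, and $\delta_4=\delta_2-8$, $\delta_5=\delta_2-24$ if $t=2$, $\delta_4=\delta_2-96$, $\delta_5=\delta_2-102$ if $t>2$. If $1\leq x\leq 2^{2t+2}+2^{2t+1}+3$ or $x\in\{\delta_2,\delta_3,\delta_4,\delta_5\}$, then $|C_x|=2m$.
   Context: For $n=2^m+1$ and an integer $x$, the 2-cyclotomic coset of $x$ modulo $n$ is $C_x=\{x\cdot 2^{j} \bmod n : j\geq 0\}\subseteq\{0,1,\dots,n-1\}$, and $|C_x|$ its cardinality. *)

(* Defs.v *)
From mathcomp Require Import all_boot.
Set Implicit Arguments. Unset Strict Implicit. Unset Printing Implicit Defensive.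

(* Exponents j are taken with j < n
   (i.e. j : 'I_n); this loses nothing since the sequence x*2^j mod n is
   eventually periodic with preperiod + period <= n (pigeonhole on n residues),
   and is in fact purely periodic for odd n. *)
Definition cyc_coset (n x : nat) : {set 'I_n} :=
  [set y : 'I_n | [exists j : 'I_n, val y == (x * 2 ^ j) %% n]].

Definition delta2 (t : nat) : nat := 2 ^ (4 * t - 1) + (2 ^ (4 * t) - 1) %/ 5.
Definition delta3 (t : nat) : nat := delta2 t - 6.
Definition delta4 (t : nat) : nat := if t == 2 then delta2 t - 8 else delta2 t - 96.
Definition delta5 (t : nat) : nat := if t == 2 then delta2 t - 24 else delta2 t - 102.

(* Main.v *)
Require Import Defs.
From mathcomp Require Import all_boot zify.

Lemma exp_mod_period N M (j : nat) : 2 ^ M = 1 %[mod N] -> 2 ^ j = 2 ^ (j %% M) %[mod N].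
Proof.
move=> HM; rewrite {1}(divn_eq j M) expnD (mulnC (j %/ M)) expnM -modnMml -modnXm HM modnXm.
by rewrite exp1n modnMml mul1n.
Qed.

Lemma key N x M : 0 < N -> odd N -> 0 < M -> M <= N -> 2 ^ M = 1 %[mod N] ->
  (forall d, 0 < d < M -> ~~ (N %| x * (2 ^ d - 1))) ->
  #|cyc_coset N x| = M.
Proof.
move=> N0 oN M0 MN HM Hd.
pose g (j : 'I_M) : 'I_N := Ordinal (ltn_pmod (x * 2 ^ j) N0).
have -> : cyc_coset N x = [set g j | j in 'I_M].
  apply/setP => y; rewrite inE; apply/existsP/imsetP.
  - case=> j /eqP Hy; exists (Ordinal (ltn_pmod j M0)) => //.
    apply: val_inj; rewrite /= Hy -modnMmr (@exp_mod_period N M j HM) modnMmr //.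
  - case=> j _ ->; exists (widen_ord MN j); by rewrite /=.
rewrite card_imset ?cardsT ?card_ord // => i j /(congr1 val) /= Hij.
have c2 : forall k, coprime N (2 ^ k).
  move=> k; apply: coprimeXr; by rewrite coprimen2.
suff H : forall (i j : 'I_M), i < j -> x * 2 ^ i = x * 2 ^ j %[mod N] -> False.
  case: (ltngtP i j) => [lt|lt|eq]; first by case: (H _ _ lt Hij).
  - by case: (H _ _ lt (esym Hij)).
  - exact: val_inj.
move=> {i j Hij} i j lt E.
have /negP := Hd (j - i) ltac:(have := ltn_ord j; lia).
apply; rewrite -(Gauss_dvdr _ (c2 i)).
have -> : 2 ^ i * (x * (2 ^ (j - i) - 1)) = x * 2 ^ j - x * 2 ^ i.
  have -> : j = i + (j - i) :> nat by lia.
  rewrite addKn expnD; have : 0 < 2 ^ (j - i) by rewrite expn_gt0.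
  move: (2 ^ i) (2 ^ (j-i)) => a b ?; nia.
rewrite -eqn_mod_dvd ?E // leq_mul2l ?leq_pexp2l //; lia.
Qed.

Lemma arith1 x p q : 0 < q -> 0 < p -> x * (p * q - 1) = p * (x * (q - 1)) + x * (p - 1).
Proof.
move=> ? ?; have -> : p * q - 1 = p * (q - 1) + (p - 1) by nia.
by rewrite mulnDr mulnCA.
Qed.

Section S.
Variables (N x : nat).
Hypothesis oN : odd N.
Let S d := N %| x * (2 ^ d - 1).

Lemma Sadd a b : S a -> S b -> S (a + b).
Proof.
rewrite /S => Ha Hb.
have -> : x * (2 ^ (a + b) - 1) = 2 ^ a * (x * (2 ^ b - 1)) + x * (2 ^ a - 1).
  rewrite expnD; have : 0 < 2 ^ a by rewrite expn_gt0.
  have : 0 < 2 ^ b by rewrite expn_gt0.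
  move: (2 ^ a) (2 ^ b) => p q ? ?; exact: arith1.
by rewrite dvdn_add // dvdn_mull.
Qed.

Lemma S0 : S 0. Proof. by rewrite /S subnn muln0 dvdn0. Qed.

Lemma Smul a k : S a -> S (a * k).
Proof.
move=> Ha; elim: k => [|k IH]; first by rewrite muln0 S0.
by rewrite mulnS addnC Sadd.
Qed.

Lemma Ssub a b : a <= b -> S a -> S b -> S (b - a).
Proof.
rewrite /S => ab Ha Hb.
have c2 : coprime N (2 ^ a) by apply: coprimeXr; rewrite coprimen2.
rewrite -(Gauss_dvdr _ c2) -(dvdn_addr _ Ha).
suff -> : x * (2 ^ a - 1) + 2 ^ a * (x * (2 ^ (b - a) - 1)) = x * (2 ^ b - 1) by [].
rewrite addnC.
have -> : b = a + (b - a) :> nat by lia.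
rewrite addKn expnD; have : 0 < 2 ^ a by rewrite expn_gt0.
have : 0 < 2 ^ (b - a) by rewrite expn_gt0.
move: (2 ^ a) (2 ^ (b - a)) => p q ? ?; by rewrite arith1.
Qed.

Lemma Sgcd d M : 0 < d -> S d -> S M -> S (gcdn d M).
Proof.
move=> d0 Sd SM; have [a _ Ha] := Bezoutl M d0.
move/dvdnP: Ha => [k Hk].
have -> : gcdn d M = d * k - M * a by rewrite (mulnC d) (mulnC M) -Hk addnK.
apply: Ssub; [by rewrite (mulnC d) (mulnC M) -Hk leq_addl| exact: Smul | exact: Smul].
Qed.
End S.

Lemma dvd_pow_sub1 a k : (2 ^ a - 1) %| (2 ^ (a * k) - 1).
Proof.
elim: k => [|k IH]; first by rewrite muln0 subnn dvdn0.
have -> : 2 ^ (a * k.+1) - 1 = 2 ^ (a * k) * (2 ^ a - 1) + (2 ^ (a * k) - 1).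
  rewrite mulnS addnC expnD; have : 0 < 2 ^ a by rewrite expn_gt0.
  have : 0 < 2 ^ (a * k) by rewrite expn_gt0.
  move: (2 ^ a) (2 ^ (a * k)) => p q ? ?; nia.
by rewrite dvdn_add // dvdn_mull.
Qed.

Lemma coprime_pm m : 0 < m -> coprime (2 ^ m - 1) (2 ^ m + 1).
Proof.
move=> m0; have h : 2 ^ m + 1 = (2 ^ m - 1) + 2.
  have : 2 <= 2 ^ m by rewrite -{1}(expn1 2) leq_pexp2l.
  lia.
rewrite h /coprime gcdnDl -/(coprime _ 2) coprimen2.
case: m m0 {h} => // m _; rewrite expnS; have : 0 < 2 ^ m by rewrite expn_gt0.
move: (2 ^ m) => p ?.
rewrite oddB ?odd_mul //=; lia.
Qed.
Lemma sqm1 p : (p + 1) * (p - 1) = p ^ 2 - 1.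
Proof. rewrite expnS expn1; case: p => [|p] //; rewrite subn1 /=; nia. Qed.
Lemma sqm1' p : p ^ 2 - 1 = (p - 1) * (p + 1).
Proof. by rewrite -sqm1 mulnC. Qed.

Lemma reduce t x : 0 < x -> x < 2 ^ (4 * t + 2) + 1 ->
  (forall f c, f * c = 2 * t + 1 -> odd c -> 3 <= c ->
     ~~ (2 ^ (4 * t + 2) + 1 %| x * (2 ^ (2 * f) + 1))) ->
  forall d, 0 < d < 2 * (4 * t + 2) -> ~~ (2 ^ (4 * t + 2) + 1 %| x * (2 ^ d - 1)).
Proof.
set m := 4 * t + 2; set N := 2 ^ m + 1 => x0 xN Hf d /andP [d0 dM].
have m0 : 0 < m by rewrite /m; lia.
have oN : odd N by rewrite /N oddD oddX /= orbF; lia.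
have cN : coprime N (2 ^ m - 1) by rewrite coprime_sym coprime_pm.
apply/negP => Sd.
have SM : N %| x * (2 ^ (2 * m) - 1).
  have -> : 2 ^ (2 * m) - 1 = (2 ^ m - 1) * N.
    by rewrite /N (mulnC 2 m) expnM sqm1'.
  by rewrite mulnA dvdn_mull.
have Sg := @Sgcd N x oN d (2 * m) d0 Sd SM.
have gM : gcdn d (2 * m) %| 2 * m by apply: dvdn_gcdr.
have gd : gcdn d (2 * m) <= d by apply: dvdn_leq => //; apply: dvdn_gcdl.
move: Sg gM gd; move: (gcdn d (2 * m)) => g Sg /dvdnP [c Hc] gd.
case oc: (odd c).
- have c3 : 3 <= c.
    case: c Hc oc => [|[|[|c]]] //= Hc _; lia.
  have c4 : coprime 4 c by rewrite (_ : 4 = 2 ^ 2) // coprimeXl // coprime2n.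
  have : 4 %| c * g by rewrite -Hc /m; apply/dvdnP; exists (2 * t + 1); lia.
  rewrite (Gauss_dvdr _ c4) => /dvdnP [f Hg]; subst g.
  have fc : f * c = 2 * t + 1.
    have : f * c * 4 = (2 * t + 1) * 4 by rewrite (mulnC f) -mulnA -Hc /m; lia.
    by move/eqP; rewrite eqn_pmul2r // => /eqP.
  have /negP := Hf f c fc oc c3; apply.
  have cf : coprime N (2 ^ (2 * f) - 1).
    apply: coprime_dvdr cN; have -> : m = 2 * f * c by rewrite -mulnA fc /m; lia.
    exact: dvd_pow_sub1.
  rewrite -(Gauss_dvdl _ cf) -mulnA.
  have -> : (2 ^ (2 * f) + 1) * (2 ^ (2 * f) - 1) = 2 ^ (f * 4) - 1.
    rewrite (_ : f * 4 = 2 * f * 2) ?(expnM 2 (2 * f) 2) ?sqm1 //; lia.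
  exact: Sg.
- have Sm : N %| x * (2 ^ m - 1).
    have -> : m = g * c./2.
      move: (odd_double_half c); rewrite oc /= add0n => hc.
      rewrite -hc -muln2 in Hc; apply/eqP.
      by rewrite -(eqn_pmul2l (isT : 0 < 2)) Hc (mulnC c./2 2) -mulnA (mulnC g c./2).
    exact: (@Smul N x).
  move: Sm; rewrite (Gauss_dvdl _ cN) => /dvdn_leq; move/(_ x0); lia.
Qed.

Lemma pow16_mod5 s : 2 ^ (4 * s) %% 5 = 1.
Proof. by rewrite expnM -modnXm /= exp1n. Qed.

Lemma param t : 2 <= t ->
  let j := 2 ^ (4 * (t - 2)) %/ 5 in
  [/\ delta2 t = 896 * j + 179, 2 ^ (4 * t + 2) = 1024 * (5 * j + 1)
    & 2 ^ (4 * (t - 2)) = 5 * j + 1].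
Proof.
move=> t2 j.
have HV : 2 ^ (4 * (t - 2)) = 5 * j + 1.
  by rewrite {1}(divn_eq (2 ^ (4 * (t - 2))) 5) pow16_mod5 mulnC.
have e1 : 2 ^ (4 * t - 1) = 128 * (5 * j + 1).
  by rewrite -HV (_ : 4 * t - 1 = 7 + 4 * (t - 2)) ?expnD //; lia.
have e2 : 2 ^ (4 * t) = 256 * (5 * j + 1).
  by rewrite -HV (_ : 4 * t = 8 + 4 * (t - 2)) ?expnD //; lia.
have e3 : 2 ^ (4 * t + 2) = 1024 * (5 * j + 1).
  by rewrite -HV (_ : 4 * t + 2 = 10 + 4 * (t - 2)) ?expnD //; lia.
split => //.
rewrite /delta2 e1 e2 (_ : 256 * (5 * j + 1) - 1 = (256 * j + 51) * 5) ?mulnK //.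
  lia.
lia.
Qed.

Lemma small_case t x f c : 2 <= t -> 1 <= x <= 2 ^ (2 * t + 2) + 2 ^ (2 * t + 1) + 3 ->
  f * c = 2 * t + 1 -> 3 <= c -> ~~ (2 ^ (4 * t + 2) + 1 %| x * (2 ^ (2 * f) + 1)).
Proof.
move=> t2 /andP [x1 xle] fc c3.
have ft : f <= t - 1 by nia.
have f1 : 1 <= f by case: f fc {ft} => //; lia.
set A := 2 ^ (2 * f); set B := 2 ^ (2 * (t - 1 - f)).
have A4 : 4 <= A by rewrite /A (_ : 4 = 2 ^ 2) // leq_pexp2l //; lia.
have B1 : 1 <= B by rewrite /B expn_gt0.
have e1 : 2 ^ (2 * t + 2) = 16 * A * B.
  by rewrite /A /B -mulnA -!expnD (_ : 2 * t + 2 = 4 + (2 * f + 2 * (t - 1 - f))) ?expnD //; lia.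
have e2 : 2 ^ (2 * t + 1) = 8 * A * B.
  by rewrite /A /B -mulnA -!expnD (_ : 2 * t + 1 = 3 + (2 * f + 2 * (t - 1 - f))) ?expnD //; lia.
have e3 : 2 ^ (4 * t + 2) = (8 * A * B) * (8 * A * B).
  by rewrite -e2 -expnD; congr (2 ^ _); lia.
rewrite e3; rewrite e1 e2 in xle.
apply/negP => /dvdn_leq; rewrite muln_gt0 x1 /= => /(_ ltac:(lia)).
have : x * (A + 1) <= (16 * A * B + 8 * A * B + 3) * (A + 1) by rewrite leq_mul2r xle orbT.
clear xle e1 e2 e3; move: (A) (B) A4 B1 => a b ? ? h1 h2; nia.
Qed.

Lemma delta_case t k f c : 2 <= t -> k <= 102 -> (t = 2 -> k <= 24) ->
  f * c = 2 * t + 1 -> odd c -> 3 <= c ->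
  ~~ (2 ^ (4 * t + 2) + 1 %| (delta2 t - k) * (2 ^ (2 * f) + 1)).
Proof.
move=> t2 k102 k24 fc oc c3.
have [Hd HN HV] := @param t t2; move: HV HN Hd.
move: (2 ^ (4 * (t - 2)) %/ 5) => j HV HN Hd.
have fo : odd f by move: (congr1 odd fc); rewrite oddM oc andbT oddD oddM /= => ->.
have [h fh] : exists h, f = 2 * h + 1.
  exists f./2; move: (odd_double_half f); rewrite fo -muln2; lia.
have [i Ai] : exists i, 2 ^ (2 * f) = 4 * (5 * i + 1).
  exists (2 ^ (4 * h) %/ 5).
  rewrite fh (_ : 2 * (2 * h + 1) = 2 + 4 * h); last lia.
  by rewrite (expnD 2 2 (4 * h)) {1}(divn_eq (2 ^ (4 * h)) 5) pow16_mod5 (mulnC _ 5).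
rewrite HN Hd Ai; set x := 896 * j + 179 - k; set r := 3 + 8 * k.
apply/negP => H.
have H8 : 1024 * (5 * j + 1) + 1 %| 8 * x * (4 * (5 * i + 1) + 1) by rewrite -mulnA dvdn_mull.
have Hsum : 8 * x * (4 * (5 * i + 1) + 1) + r * (4 * (5 * i + 1) + 1) =
            (1024 * (5 * j + 1) + 1) * (7 * (4 * i + 1)).
  rewrite -mulnDl (_ : 8 * x + r = 7 * (1024 * j + 205)); last by rewrite /x /r; lia.
  rewrite (_ : 1024 * (5 * j + 1) + 1 = 5 * (1024 * j + 205)); last lia.
  rewrite (_ : 4 * (5 * i + 1) + 1 = 5 * (4 * i + 1)); last lia.
  move: (1024 * j + 205) (4 * i + 1) => q w.
  by rewrite -!mulnA !(mulnCA q) (mulnCA 7 5).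
have : 1024 * (5 * j + 1) + 1 %| r * (4 * (5 * i + 1) + 1).
  by rewrite -(dvdn_addr _ H8) Hsum dvdn_mulr.
move=> /dvdn_leq; move/(_ ltac:(rewrite muln_gt0; apply/andP; split; rewrite /r; lia)).
rewrite -Ai.
case: (ltnP t 3) => t3.
- have t2' : t = 2 by lia.
  have f1 : f = 1 by subst t; timeout 20 nia.
  have j0 : j = 0 by move: HV; rewrite t2' subnn muln0 expn0; lia.
  rewrite f1 j0 /r; have := k24 t2'; lia.
- have f3 : f * 3 <= 2 * t + 1 by rewrite -fc leq_mul2l c3 orbT.
  have hb : 2 * f + 1 <= 4 * (t - 2) by lia.
  have : 2 ^ (2 * f) + 1 <= 5 * j + 1.
    rewrite -HV; apply: leq_trans (_ : 2 ^ (2 * f + 1) <= _); last by rewrite leq_pexp2l.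
    rewrite expnD expn1 muln2 -addnn leq_add2l expn_gt0 //.
  move: (2 ^ (2 * f) + 1) => a ha hle.
  have : r * a <= 819 * (5 * j + 1) by apply: leq_mul => //; rewrite /r; lia.
  lia.
Qed.
Theorem lemma4p6 (t x : nat) :
  2 <= t ->
  (1 <= x <= 2 ^ (2 * t + 2) + 2 ^ (2 * t + 1) + 3) \/
    x \in [:: delta2 t; delta3 t; delta4 t; delta5 t] ->
  #|cyc_coset (2 ^ (4 * t + 2) + 1) x| = 2 * (4 * t + 2).
Proof.
move=> t2 Hx.
have P0 : 0 < 2 ^ (4 * t) by rewrite expn_gt0.
have e42 : 2 ^ (4 * t + 2) = 4 * 2 ^ (4 * t) by rewrite expnD mulnC.
have lt4 : 4 * t < 2 ^ (4 * t) by apply: ltn_expl.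
have HM : 2 ^ (2 * (4 * t + 2)) = 1 %[mod 2 ^ (4 * t + 2) + 1].
  have -> : 2 ^ (2 * (4 * t + 2)) = (2 ^ (4 * t + 2) - 1) * (2 ^ (4 * t + 2) + 1) + 1.
    rewrite (mulnC 2) expnM -sqm1' subnK //.
    by rewrite expn_gt0 expn_gt0.
  by rewrite modnMDl.
apply: key => //.
- by rewrite addn_gt0 orbT.
- by rewrite oddD oddX /= orbF; lia.
- lia.
- rewrite e42; lia.
apply: reduce.
- case: Hx => [/andP [] //|]; rewrite !inE.
  have [Hd _ _] := @param t t2.
  rewrite /delta3 /delta4 /delta5 Hd; case: (t == 2); lia.
- case: Hx => [/andP [_ xle]|].
  + have e1 : 2 ^ (2 * t + 2) = 2 * 2 ^ (2 * t + 1) by rewrite (addnS _ 1) expnS.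
    have e2 : 2 ^ (4 * t + 2) = 2 ^ (2 * t + 1) * 2 ^ (2 * t + 1) by rewrite -expnD; congr (2 ^ _); lia.
    have : 32 <= 2 ^ (2 * t + 1).
      by rewrite (_ : 32 = 2 ^ 5) // leq_pexp2l //; lia.
    rewrite e2; rewrite e1 in xle; move: (2 ^ (2 * t + 1)) xle => C ? ?; nia.
  + have [Hd HN _] := @param t t2; rewrite !inE HN.
    rewrite /delta3 /delta4 /delta5 Hd; case: (t == 2); lia.
- move=> f c fc oc c3.
  case: Hx => [Hx|]; first exact: (@small_case t x f c t2 Hx fc c3).
  rewrite !inE /delta3 /delta4 /delta5.
  case/orP => [/eqP ->|]; first by rewrite -(subn0 (delta2 t)); apply: (@delta_case t 0 f c t2 isT (fun _ => isT) fc oc c3).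
  case/orP => [/eqP ->|]; first by apply: (@delta_case t 6 f c t2 isT (fun _ => isT) fc oc c3).
  case/orP => [/eqP ->|].
    case: eqP => [e2|ne] /=.
      by apply: (@delta_case t 8 f c t2 isT (fun _ => isT) fc oc c3).
    by apply: (@delta_case t 96 f c t2 isT (fun h => False_ind _ (ne h)) fc oc c3).
  move=> /eqP ->.
  case: eqP => [e2|ne] /=.
    by apply: (@delta_case t 24 f c t2 isT (fun _ => isT) fc oc c3).
  by apply: (@delta_case t 102 f c t2 isT (fun h => False_ind _ (ne h)) fc oc c3).
Qed.
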